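(* Let $M$ be an ordinal monoid with merge and $A\subseteq M$ nonempty. Then at least one of the following holds: (1) $a\cdot\mathrm{Cl}^{+}_{\sharp}(A)\subsetneq\mathrm{Cl}^{+}_{\sharp}(A)$ for some $a\in A$; (2) $\mathrm{Cl}^{+}_{\sharp}(A)\cdot a\subsetneq\mathrm{Cl}^{+}_{\sharp}(A)$ for some $a\in A$; (3) $\mathrm{Cl}^{+}_{\sharp}(A)$ has a maximum element for the order $\le$.
   Context: An ordinal monoid has generalised product $\pi$ on countable-ordinal-length words; $1=\pi(\varepsilon)$, $x\cdot y=\pi(xy)$, $x^\omega=\pi(xxx\cdots)$; ordered by $\le$ if $u\le v$ letterwise implies $\pi(u)\le\pi(v)$. In a finite semigroup $x^!$ is the idempotent power, $x^{!+k}$ the eventual value of $x^{n!+k}$. Ordinal monoid with merge: $(M,1,\le,\cdot,-^\omega,-^\sharp)$, $M$ finite, $(M,1,\le,\cdot,-^\omega)$ the presentation of an ordered finite ordinal monoid, $-^\sharp\colon M\to M$ monotone with $a^{!+k}\le a^\sharp$, $(a^!)^\sharp=a^!$, $a^\sharp a^\sharp=(a^\sharp)^\sharp=a^\sharp$, $(ab)^\sharp=a(ba)^\sharp b$ for all $a,b$, $k\in\mathbb Z$. $\mathrm{Cl}^{+}_{\sharp}(A)$ is the closure of $A$ under $\cdot$ and $-^\sharp$; for $a\in M$, $X\subseteq M$: $a\cdot X=\{a\cdot x:x\in X\}$, $X\cdot a=\{x\cdot a:x\in X\}$. *)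

(* Defs.v *)
From mathcomp Require Import all_boot all_order all_algebra.
Set Implicit Arguments. Unset Strict Implicit. Unset Printing Implicit Defensive.

Definition mpow (T : Type) (one : T) (mul : T -> T -> T) (a : T) (n : nat) : T :=
  iter n (mul a) one.

(* x^{!+k} in a finite monoid with N = #|T| elements: the eventual value of
   x^{n!+k}.  It equals x^{N! * (|k|+1) + k}: this exponent is >= N (hence >=
   the index of x) and congruent to n!+k modulo N! (hence modulo the period of x)
   for every n >= N. *)
Definition bang_exp (N : nat) (k : int) : nat :=
  absz ((N`!)%:Z * (absz k).+1%:Z + k)%R.

Record ordinal_monoid_merge := OMM {
  omm_car :> finType;
  omm_one : omm_car;
  omm_le : rel omm_car;
  omm_mul : omm_car -> omm_car -> omm_car;
  omm_omega : omm_car -> omm_car;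
  omm_sharp : omm_car -> omm_car;
  omm_le_refl : forall a, omm_le a a;
  omm_le_anti : forall a b, omm_le a b -> omm_le b a -> a = b;
  omm_le_trans : forall a b c, omm_le a b -> omm_le b c -> omm_le a c;
  omm_mulA : forall a b c, omm_mul a (omm_mul b c) = omm_mul (omm_mul a b) c;
  omm_mul1l : forall a, omm_mul omm_one a = a;
  omm_mul1r : forall a, omm_mul a omm_one = a;
  omm_omega_mul : forall a b,
      omm_omega (omm_mul a b) = omm_mul a (omm_omega (omm_mul b a));
  omm_omega_pow : forall a n, 0 < n ->
      omm_omega (mpow omm_one omm_mul a n) = omm_omega a;
  omm_mul_mono : forall a a' b b', omm_le a a' -> omm_le b b' ->
      omm_le (omm_mul a b) (omm_mul a' b');
  omm_omega_mono : forall a b, omm_le a b -> omm_le (omm_omega a) (omm_omega b);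
  omm_sharp_mono : forall a b, omm_le a b -> omm_le (omm_sharp a) (omm_sharp b);
  omm_sharp_ge : forall a (k : int),
      omm_le (mpow omm_one omm_mul a (bang_exp #|omm_car| k)) (omm_sharp a);
  omm_sharp_idem_pow : forall a,
      omm_sharp (mpow omm_one omm_mul a (bang_exp #|omm_car| 0)) =
      mpow omm_one omm_mul a (bang_exp #|omm_car| 0);
  omm_sharp_sq : forall a, omm_mul (omm_sharp a) (omm_sharp a) = omm_sharp a;
  omm_sharp_sharp : forall a, omm_sharp (omm_sharp a) = omm_sharp a;
  omm_sharp_mul : forall a b,
      omm_sharp (omm_mul a b) = omm_mul a (omm_mul (omm_sharp (omm_mul b a)) b)
}.

Definition cl_step (M : ordinal_monoid_merge) (A X : {set M}) : {set M} :=
  A :|: [set omm_mul x y | x in X, y in X] :|: [set omm_sharp x | x in X].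

Definition Clsharp (M : ordinal_monoid_merge) (A : {set M}) : {set M} :=
  fixset (cl_step A).

Definition lmul_set (M : ordinal_monoid_merge) (a : M) (X : {set M}) : {set M} :=
  [set omm_mul a x | x in X].
Definition rmul_set (M : ordinal_monoid_merge) (X : {set M}) (a : M) : {set M} :=
  [set omm_mul x a | x in X].

(* Main.v *)
Require Import Defs.
From mathcomp Require Import all_boot all_order all_algebra.
From mathcomp Require Import all_fingroup all_solvable.
Import GRing.Theory.
Set Implicit Arguments. Unset Strict Implicit.

Lemma iter_fact (T : finType) (f : T -> T) (C : {set T}) :
  f @: C = C -> forall x, x \in C -> iter #|T|`! f x = x.
Proof.
move=> fC.
have inj : {in C &, injective f}.
  by apply/imset_injP; rewrite fC.
have fCin : forall x, x \in C -> f x \in C.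
  by move=> x xC; rewrite -fC; apply: imset_f.
pose g x := if x \in C then f x else x.
have ginj : injective g.
  move=> x y; rewrite /g; case: ifP => xC; case: ifP => yC.
  - exact: inj.
  - by move=> e; move: (fCin x xC); rewrite e yC.
  - by move=> e; move: (fCin y yC); rewrite -e xC.
  - by [].
pose s := perm ginj.
have s1 : (s ^+ #|T|`!)%g = 1%g.
  have -> : #|T|`! = #|[set: {perm T}]|.
    rewrite cardsT; transitivity #|perm_on [set: T]|; first by rewrite card_perm cardsT.
    apply: eq_card => u; rewrite !inE. by apply/subsetP => z; rewrite inE.
  by apply: expg_cardG; rewrite inE.
move=> x xC.
have H : forall n, iter n s x = iter n f x /\ iter n f x \in C.
  elim=> [|n [IH1 IH2]] //=.
  by rewrite IH1 permE /g IH2; split=> //; apply: fCin.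
by rewrite -(proj1 (H _)) -permX s1 perm1.
Qed.


Lemma mpowD (M : ordinal_monoid_merge) (a : M) m n :
  mpow (omm_one M) (@omm_mul M) a (m + n) =
  @omm_mul M (mpow (omm_one M) (@omm_mul M) a m) (mpow (omm_one M) (@omm_mul M) a n).
Proof.
elim: m => [|m IH]; first by rewrite add0n /= omm_mul1l.
by rewrite addSn /mpow /= -/(mpow _ _ a (m + n)) -/(mpow _ _ a m) IH omm_mulA.
Qed.

Lemma mpow1 (M : ordinal_monoid_merge) (a : M) :
  mpow (omm_one M) (@omm_mul M) a 1 = a.
Proof. by rewrite /mpow /= omm_mul1r. Qed.

Lemma mpow_iterl (M : ordinal_monoid_merge) (a x : M) n :
  @omm_mul M (mpow (omm_one M) (@omm_mul M) a n) x = iter n (@omm_mul M a) x.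
Proof.
elim: n => [|n IH] /=; first by rewrite omm_mul1l.
by rewrite -omm_mulA -/(mpow _ _ a n) IH.
Qed.

Lemma mpow_iterr (M : ordinal_monoid_merge) (a x : M) n :
  @omm_mul M x (mpow (omm_one M) (@omm_mul M) a n) = iter n (fun y => @omm_mul M y a) x.
Proof.
elim: n => [|n IH]; first by rewrite /= omm_mul1r.
have -> : mpow (omm_one M) (@omm_mul M) a n.+1 =
   @omm_mul M (mpow (omm_one M) (@omm_mul M) a n) a by rewrite -addn1 mpowD mpow1.
by rewrite omm_mulA IH.
Qed.

Lemma cl_mono (M : ordinal_monoid_merge) (A : {set M}) :
  {homo cl_step A : X Y / X \subset Y}.
Proof.
move=> X Y XY; apply/subsetP => z; rewrite /cl_step !inE.
case/orP => [/orP [->|]|] //.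
  case/imset2P => x y xX yX ->; apply/orP; left; apply/orP; right.
  by apply: imset2_f; apply: (subsetP XY).
case/imsetP => x xX ->; apply/orP; right; apply: imset_f; exact: (subsetP XY).
Qed.

Lemma Cl_A (M : ordinal_monoid_merge) (A : {set M}) x : x \in A -> x \in Clsharp A.
Proof.
move=> xA; rewrite /Clsharp -(fixsetK (@cl_mono _ A)) /cl_step !inE xA //.
Qed.

Lemma Cl_mul (M : ordinal_monoid_merge) (A : {set M}) x y :
  x \in Clsharp A -> y \in Clsharp A -> @omm_mul M x y \in Clsharp A.
Proof.
move=> xC yC; rewrite /Clsharp -(fixsetK (@cl_mono _ A)) /cl_step !inE.
by rewrite imset2_f ?orbT.
Qed.

Lemma Cl_sharp (M : ordinal_monoid_merge) (A : {set M}) x :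
  x \in Clsharp A -> @omm_sharp M x \in Clsharp A.
Proof.
move=> xC; rewrite /Clsharp -(fixsetK (@cl_mono _ A)) /cl_step !inE.
by rewrite imset_f ?orbT.
Qed.

Lemma Cl_pow (M : ordinal_monoid_merge) (A : {set M}) a n :
  a \in Clsharp A -> mpow (omm_one M) (@omm_mul M) a n.+1 \in Clsharp A.
Proof.
move=> aC; elim: n => [|n IH]; first by rewrite mpow1.
exact: Cl_mul.
Qed.

Theorem lemma5p6 (M : ordinal_monoid_merge) (A : {set M}) :
  A != set0 ->
  [\/ exists2 a, a \in A & lmul_set a (Clsharp A) \proper Clsharp A,
      exists2 a, a \in A & rmul_set (Clsharp A) a \proper Clsharp A
    | exists2 m, m \in Clsharp A & forall x, x \in Clsharp A -> omm_le x m].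
Proof.
move=> An0.
set C := Clsharp A.
case: (boolP [exists a in A, lmul_set a C \proper C]) => [/exists_inP [a aA pr]|H1].
  by apply: Or31; exists a.
case: (boolP [exists a in A, rmul_set C a \proper C]) => [/exists_inP [a aA pr]|H2].
  by apply: Or32; exists a.
apply: Or33.
set n0 := #|M|`!.
set pw := mpow (omm_one M) (@omm_mul M).
have lC : forall a, a \in A -> [set @omm_mul M a x | x in C] = C.
  move=> a aA.
  have sub : lmul_set a C \subset C.
    apply/subsetP => z /imsetP [x xC ->]; apply: Cl_mul => //; exact: Cl_A.
  apply/eqP; rewrite eqEsubset sub /=.
  apply/negPn; apply: contra H1 => h; apply/exists_inP; exists a => //.
  by rewrite properE sub h.
have rC : forall a, a \in A -> [set @omm_mul M x a | x in C] = C.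
  move=> a aA.
  have sub : rmul_set C a \subset C.
    apply/subsetP => z /imsetP [x xC ->]; apply: Cl_mul => //; exact: Cl_A.
  apply/eqP; rewrite eqEsubset sub /=.
  apply/negPn; apply: contra H2 => h; apply/exists_inP; exists a => //.
  by rewrite properE sub h.
have idL : forall a x, a \in A -> x \in C -> @omm_mul M (pw a n0) x = x.
  move=> a x aA xC; rewrite /pw mpow_iterl; exact: iter_fact (lC a aA) x xC.
have idR : forall a x, a \in A -> x \in C -> @omm_mul M x (pw a n0) = x.
  move=> a x aA xC; rewrite /pw mpow_iterr; exact: iter_fact (rC a aA) x xC.
have n0E : n0 = n0.-1.+1 by rewrite prednK // fact_gt0.
have powC : forall a, a \in C -> pw a n0 \in C.
  by move=> a aC; rewrite n0E; apply: Cl_pow.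
have [a0 a0A] := set0Pn _ An0.
set e := pw a0 n0.
have eC : e \in C by apply: powC; apply: Cl_A.
have eL : forall x, x \in C -> @omm_mul M e x = x by move=> x xC; apply: idL.
have eR : forall x, x \in C -> @omm_mul M x e = x by move=> x xC; apply: idR.
have powE : forall a, a \in A -> pw a n0 = e.
  move=> a aA; rewrite -[LHS]eR ?powC ?Cl_A //; exact: idL.
have b0 : bang_exp #|M| 0 = n0 by rewrite /bang_exp /= muln1 addn0.
have b1 : bang_exp #|M| 1 = n0 + (n0 + 1).
  by rewrite /bang_exp /= muln2 -addnn addnA.
have eS : forall a, a \in A -> @omm_le M e (@omm_sharp M a).
  by move=> a aA; have := omm_sharp_ge a 0; rewrite b0 -/pw powE.
have aS : forall a, a \in A -> @omm_le M a (@omm_sharp M a).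
  move=> a aA; have := omm_sharp_ge a 1; rewrite b1 -/pw.
  rewrite /pw !mpowD mpow1 -/pw powE //.
  by rewrite (eL a) ?Cl_A // (eL a) ?Cl_A.
have [p pC [ep Ap]] : exists2 p, p \in C & (@omm_le M e p /\ forall a, a \in A -> @omm_le M a p).
  have gen : forall s : seq M, {subset s <= A} ->
      exists2 p, p \in C & (@omm_le M e p /\ forall a, a \in s -> @omm_le M a p).
    elim=> [|a s IH] sA.
      by exists e => //; split=> //; apply: omm_le_refl.
    have aA : a \in A by apply: sA; rewrite inE eqxx.
    have [p pC [ep sp]] := IH (fun x xs => sA x ltac:(by rewrite inE xs orbT)).
    have sC : @omm_sharp M a \in C by apply: Cl_sharp; apply: Cl_A.
    exists (@omm_mul M p (@omm_sharp M a)); first exact: Cl_mul.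
    split.
      by rewrite -(eL e eC); apply: omm_mul_mono; [exact: ep | exact: eS].
    move=> b; rewrite inE => /orP [/eqP ->|bs].
      by rewrite -{1}(eL a (Cl_A aA)); apply: omm_mul_mono; [exact: ep | exact: aS].
    have bC : b \in C by apply: Cl_A; apply: sA; rewrite inE bs orbT.
    by rewrite -(eR b bC); apply: omm_mul_mono; [apply: sp | apply: eS].
  have [p pC [ep sp]] := gen (enum A) (fun x => ltac:(by rewrite mem_enum)).
  by exists p => //; split=> // a aA; apply: sp; rewrite mem_enum.
set m := @omm_sharp M p.
have mC : m \in C by apply: Cl_sharp.
have pwp : forall n, @omm_le M e (pw p n.+1) /\ @omm_le M p (pw p n.+1).
  elim=> [|n [IH1 IH2]]; first by rewrite /pw mpow1; split=> //; apply: omm_le_refl.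
  split.
    by rewrite -{1}(eL e eC); apply: omm_mul_mono.
  by rewrite -{1}(eR p pC); apply: omm_mul_mono; [apply: omm_le_refl|].
have pm : @omm_le M p m.
  apply: omm_le_trans (proj2 (pwp n0.-1)) _.
  by rewrite -n0E; have := omm_sharp_ge p 0; rewrite b0.
exists m => // x /fix_order_proof [k].
elim: k x => [|k IH] x /=; first by rewrite inE.
rewrite /cl_step !inE => /orP [/orP [xA|]|].
- exact: omm_le_trans (Ap x xA) pm.
- case/imset2P => y z yk zk ->.
  have mm : @omm_mul M m m = m := omm_sharp_sq p.
  by rewrite -mm; apply: (omm_mul_mono (IH y yk) (IH z zk)).
- case/imsetP => y yk ->.
  have ms : @omm_sharp M m = m := omm_sharp_sharp p.
  by rewrite -ms; apply: (omm_sharp_mono (IH y yk)).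
Qed.
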